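(* Let $\mathcal P$, $\widehat U=(\widehat h,\widehat{q^x},\widehat{q^y})$, $\widehat B$, $\widehat u,\widehat v$ and the stochastic Galerkin shallow water system be as in the context. Define $$E(\widehat U)=\tfrac12\big((\widehat{q^x})^\top\widehat u+(\widehat{q^y})^\top\widehat v\big)+\tfrac12 g\|\widehat h\|^2+g\,\widehat h^\top\widehat B,$$ $$H(\widehat U)=\tfrac12\big(\widehat u^\top\mathcal P(\widehat{q^x})\widehat u+\widehat v^\top\mathcal P(\widehat{q^x})\widehat v\big)+g(\widehat{q^x})^\top(\widehat h+\widehat B),$$ $$K(\widehat U)=\tfrac12\big(\widehat v^\top\mathcal P(\widehat{q^y})\widehat v+\widehat u^\top\mathcal P(\widehat{q^y})\widehat u\big)+g(\widehat{q^y})^\top(\widehat h+\widehat B).$$ If $\mathcal P(\widehat h)$ is strictly positive definite, then $(E,H,K)$ is an entropy flux pair for the stochastic Galerkin shallow water system, i.e. $E$ is convex in $\widehat U$ and every smooth solution satisfies $E(\widehat U)_t+H(\widehat U)_x+K(\widehat U)_y=0$.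
   Context: Let $\xi$ be a random variable in $\mathbb R^d$ with density $\rho$ having finite moments of all orders, and let $\phi_1\equiv1,\phi_2,\dots,\phi_K$ be polynomials orthonormal in $L^2_\rho$. For $k=1,\dots,K$ let $\mathcal M_k\in\mathbb R^{K\times K}$ with $(\mathcal M_k)_{l,m}=\int\phi_k\phi_l\phi_m\rho$, and for $\widehat z\in\mathbb R^K$ set $\mathcal P(\widehat z)=\sum_{k=1}^K\widehat z_k\mathcal M_k$ (a symmetric matrix). Let $g>0$. The stochastic Galerkin (SG) shallow water system is $\widehat U_t+\widehat F(\widehat U)_x+\widehat G(\widehat U)_y=\widehat S(\widehat U)$ for $\widehat U(x,y,t)=(\widehat h^\top,(\widehat{q^x})^\top,(\widehat{q^y})^\top)^\top\in\mathbb R^{3K}$, with a time-independent bottom coefficient vector $\widehat B(x,y)\in\mathbb R^K$, where $\widehat F(\widehat U)=\big(\widehat{q^x};\ \mathcal P(\widehat{q^x})\mathcal P^{-1}(\widehat h)\widehat{q^x}+\tfrac12 g\mathcal P(\widehat h)\widehat h;\ \mathcal P(\widehat{q^x})\mathcal P^{-1}(\widehat h)\widehat{q^y}\big)$, $\widehat G(\widehat U)=\big(\widehat{q^y};\ \mathcal P(\widehat{q^y})\mathcal P^{-1}(\widehat h)\widehat{q^x};\ \mathcal P(\widehat{q^y})\mathcal P^{-1}(\widehat h)\widehat{q^y}+\tfrac12 g\mathcal P(\widehat h)\widehat h\big)$, $\widehat S(\widehat U)=\big(0;\ -g\mathcal P(\widehat h)\widehat B_x;\ -g\mathcal P(\widehat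 h)\widehat B_y\big)$ (semicolons separate $K$-blocks). When $\mathcal P(\widehat h)$ is invertible, $\widehat u=\mathcal P^{-1}(\widehat h)\widehat{q^x}$ and $\widehat v=\mathcal P^{-1}(\widehat h)\widehat{q^y}$. An entropy flux pair for a balance law $U_t+F_x+G_y=S$ is a triple $(E,H,K)$ of scalar functions with $E$ convex in the state such that smooth solutions satisfy $E_t+H_x+K_y=0$. *)

(* Defs.v *)
From HB Require Import structures.
From mathcomp Require Import all_boot all_order all_algebra.
From mathcomp Require Import all_classical all_reals all_analysis.
Set Implicit Arguments. Unset Strict Implicit. Unset Printing Implicit Defensive.
Import Order.TTheory GRing.Theory Num.Theory.
Import numFieldNormedType.Exports.
Local Open Scope classical_set_scope.
Local Open Scope ring_scope.

Section Defs.
Variable R : realType.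

(** For nonnegative measurable f this is the d-dimensional Lebesgue
    integral (Tonelli). *)
Fixpoint iter_lebesgue_integral (n : nat) : (n.-tuple R -> \bar R) -> \bar R :=
  match n with
  | 0 => fun f => f [tuple]
  | n'.+1 => fun f =>
      (\int[@lebesgue_measure R]_x
          iter_lebesgue_integral (fun t : n'.-tuple R => f [tuple of x :: t]))%E
  end.

Definition has_density dT (T : measurableType dT) (P : probability T R)
    (d : nat) (xi : T -> d.-tuple R) (rho : d.-tuple R -> R) : Prop :=
  (forall t, 0 <= rho t) /\
  forall A : set (d.-tuple R), measurable A ->
    P (xi @^-1` A) =
    iter_lebesgue_integral (fun t => ((\1_A t : R) * rho t)%:E).

Definition finite_moments dT (T : measurableType dT) (P : probability T R)
    (d : nat) (xi : T -> d.-tuple R) : Prop :=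
  forall (i : 'I_d) (n : nat),
    ('E_P[fun w => (`|tnth (xi w) i| ^+ n)%R] < +oo)%E.

Definition is_polyfun (d : nat) (f : d.-tuple R -> R) : Prop :=
  exists s : seq (R * ('I_d -> nat)),
    forall t, f t = \sum_(p <- s) p.1 * \prod_(i < d) tnth t i ^+ p.2 i.

Definition Mk dT (T : measurableType dT) (P : probability T R)
    (d K : nat) (xi : T -> d.-tuple R) (phi : 'I_K -> d.-tuple R -> R)
    (k : 'I_K) : 'M[R]_K :=
  \matrix_(l < K, m < K)
    fine ('E_P[fun w => (phi k (xi w) * phi l (xi w) * phi m (xi w))%R])%E.

Variable K : nat.

Definition Pmat (M : 'I_K -> 'M[R]_K) (z : 'cV[R]_K) : 'M[R]_K :=
  \sum_(k < K) z k 0 *: M k.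

Definition dotv (a b : 'cV[R]_K) : R := (a^T *m b) 0 0.

Definition posdef (A : 'M[R]_K) : Prop :=
  forall v : 'cV[R]_K, v != 0 -> 0 < (v^T *m A *m v) 0 0.

Variables (M : 'I_K -> 'M[R]_K) (g : R).

Definition SGu (h qx : 'cV[R]_K) : 'cV[R]_K := invmx (Pmat M h) *m qx.

Definition entropyE (h qx qy B : 'cV[R]_K) : R :=
  2^-1 * (dotv qx (SGu h qx) + dotv qy (SGu h qy))
  + 2^-1 * g * dotv h h + g * dotv h B.

Definition entropyH (h qx qy B : 'cV[R]_K) : R :=
  2^-1 * (dotv (SGu h qx) (Pmat M qx *m SGu h qx)
          + dotv (SGu h qy) (Pmat M qx *m SGu h qy))
  + g * dotv qx (h + B).

Definition entropyK (h qx qy B : 'cV[R]_K) : R :=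
  2^-1 * (dotv (SGu h qy) (Pmat M qy *m SGu h qy)
          + dotv (SGu h qx) (Pmat M qy *m SGu h qx))
  + g * dotv qy (h + B).

Definition flux_F_qx (h qx qy : 'cV[R]_K) : 'cV[R]_K :=
  Pmat M qx *m invmx (Pmat M h) *m qx + (2^-1 * g) *: (Pmat M h *m h).
Definition flux_F_qy (h qx qy : 'cV[R]_K) : 'cV[R]_K :=
  Pmat M qx *m invmx (Pmat M h) *m qy.
Definition flux_G_qx (h qx qy : 'cV[R]_K) : 'cV[R]_K :=
  Pmat M qy *m invmx (Pmat M h) *m qx.
Definition flux_G_qy (h qx qy : 'cV[R]_K) : 'cV[R]_K :=
  Pmat M qy *m invmx (Pmat M h) *m qy + (2^-1 * g) *: (Pmat M h *m h).

End Defs.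

Section Partials.
Variables (R : realType) (V : normedModType R).
Definition pdx (f : R -> R -> R -> V) (x y t : R) : V := derive1 (fun s => f s y t) x.
Definition pdy (f : R -> R -> R -> V) (x y t : R) : V := derive1 (fun s => f x s t) y.
Definition pdt (f : R -> R -> R -> V) (x y t : R) : V := derive1 (fun s => f x y s) t.
Definition pdx2 (f : R -> R -> V) (x y : R) : V := derive1 (fun s => f s y) x.
Definition pdy2 (f : R -> R -> V) (x y : R) : V := derive1 (fun s => f x s) y.
End Partials.

(* Main.v *)
Require Import Defs.
From HB Require Import structures.
From mathcomp Require Import all_boot all_order all_algebra.
From mathcomp Require Import all_classical all_reals all_analysis.
From mathcomp Require Import ring lra.
Set Implicit Arguments. Unset Strict Implicit. Unset Printing Implicit Defensive.
Import Order.TTheory GRing.Theory Num.Theory.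
Import numFieldNormedType.Exports.
Local Open Scope classical_set_scope.
Local Open Scope ring_scope.
Definition Msym {R : realType} {K : nat} (M : 'I_K -> 'M[R]_K) :=
  forall k l m, M k l m = M l k m /\ M k l m = M k m l.

Lemma PmatD (R : realType) K (M : 'I_K -> 'M[R]_K) a b :
  Pmat M (a + b) = Pmat M a + Pmat M b.
Proof. by rewrite /Pmat -big_split; apply: eq_bigr => k _; rewrite mxE scalerDl. Qed.

Lemma PmatZ (R : realType) K (M : 'I_K -> 'M[R]_K) c a :
  Pmat M (c *: a) = c *: Pmat M a.
Proof. by rewrite /Pmat scaler_sumr; apply: eq_bigr => k _; rewrite mxE scalerA. Qed.

Lemma PmatN (R : realType) K (M : 'I_K -> 'M[R]_K) a :
  Pmat M (- a) = - Pmat M a.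
Proof. by rewrite -scaleN1r PmatZ scaleN1r. Qed.

Lemma PmatB (R : realType) K (M : 'I_K -> 'M[R]_K) a b :
  Pmat M (a - b) = Pmat M a - Pmat M b.
Proof. by rewrite PmatD PmatN. Qed.

Lemma Pmat_tr (R : realType) K (M : 'I_K -> 'M[R]_K) a :
  Msym M -> (Pmat M a)^T = Pmat M a.
Proof.
move=> hs; apply/matrixP => i j; rewrite !mxE /Pmat !summxE.
by apply: eq_bigr => k _; rewrite !mxE (proj2 (hs k i j)).
Qed.

Lemma Pmat_comm (R : realType) K (M : 'I_K -> 'M[R]_K) a b :
  Msym M -> Pmat M a *m b = Pmat M b *m a.
Proof.
move=> hs; apply/matrixP => i j; rewrite !mxE.
under eq_bigr do rewrite /Pmat summxE big_distrl.
under [RHS]eq_bigr do rewrite /Pmat summxE big_distrl.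
rewrite exchange_big; apply: eq_bigr => k _; apply: eq_bigr => l _.
rewrite !mxE.
have -> : j = 0 by apply/val_inj; case: j => [[]].
rewrite (proj1 (hs k i l)) (proj2 (hs i k l)) -(proj1 (hs l i k)).
simpl; ring.
Qed.

Lemma dotvC (R : realType) K (a b : 'cV[R]_K) : dotv a b = dotv b a.
Proof. rewrite /dotv !mxE; apply: eq_bigr => i _; rewrite !mxE mulrC. done. Qed.

Lemma dotvDl (R : realType) K (a b c : 'cV[R]_K) : dotv (a + b) c = dotv a c + dotv b c.
Proof. by rewrite /dotv linearD /= mulmxDl mxE. Qed.
Lemma dotvDr (R : realType) K (a b c : 'cV[R]_K) : dotv c (a + b) = dotv c a + dotv c b.
Proof. by rewrite /dotv mulmxDr mxE. Qed.
Lemma dotvZl (R : realType) K k (a c : 'cV[R]_K) : dotv (k *: a) c = k * dotv a c.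
Proof. by rewrite /dotv linearZ /= -scalemxAl mxE. Qed.
Lemma dotvZr (R : realType) K k (a c : 'cV[R]_K) : dotv c (k *: a) = k * dotv c a.
Proof. by rewrite /dotv -scalemxAr mxE. Qed.
Lemma dotvNl (R : realType) K (a c : 'cV[R]_K) : dotv (- a) c = - dotv a c.
Proof. by rewrite -scaleN1r dotvZl mulN1r. Qed.
Lemma dotvNr (R : realType) K (a c : 'cV[R]_K) : dotv c (- a) = - dotv c a.
Proof. by rewrite -scaleN1r dotvZr mulN1r. Qed.
Lemma dotvBl (R : realType) K (a b c : 'cV[R]_K) : dotv (a - b) c = dotv a c - dotv b c.
Proof. by rewrite dotvDl dotvNl. Qed.
Lemma dotvBr (R : realType) K (a b c : 'cV[R]_K) : dotv c (a - b) = dotv c a - dotv c b.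
Proof. by rewrite dotvDr dotvNr. Qed.
Lemma dotv_mul (R : realType) K (A : 'M[R]_K) (a c : 'cV[R]_K) :
  dotv a (A *m c) = dotv (A^T *m a) c.
Proof. by rewrite /dotv trmx_mul trmxK mulmxA. Qed.
Lemma dotvP (R : realType) K (M : 'I_K -> 'M[R]_K) a b c : Msym M ->
  dotv a (Pmat M b *m c) = dotv c (Pmat M b *m a).
Proof. by move=> hs; rewrite dotv_mul Pmat_tr // dotvC. Qed.
Lemma dotv_ge0 (R : realType) K (a : 'cV[R]_K) : 0 <= dotv a a.
Proof. rewrite /dotv mxE; apply: sumr_ge0 => i _; rewrite mxE -expr2; exact: sqr_ge0. Qed.

Lemma posdef_unit (R : realType) K (A : 'M[R]_K) : posdef A -> A \in unitmx.
Proof.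
move=> pA; rewrite unitmxE unitfE; apply/negP => /det0P [v nv0 vA].
have nv : v^T != 0.
  by apply: contra nv0 => /eqP /(congr1 trmx); rewrite trmxK trmx0 => ->.
by have := pA _ nv; rewrite trmxK vA mul0mx mxE ltxx.
Qed.

Lemma posdef_ge0 (R : realType) K (A : 'M[R]_K) v : posdef A -> 0 <= dotv v (A *m v).
Proof.
move=> pA; rewrite /dotv mulmxA; have [->|nv] := eqVneq v 0.
  by rewrite mulmx0 mxE.
exact/ltW/pA.
Qed.

Lemma quad_bound (R : realType) K (A : 'M[R]_K) w q : posdef A -> A^T = A ->
  2 * dotv w q - dotv w (A *m w) <= dotv q (invmx A *m q).
Proof.
move=> pA sA; have uA := posdef_unit pA.
have := posdef_ge0 (w - invmx A *m q) pA.
rewrite mulmxBr mulKVmx // !(dotvBl, dotvBr).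
rewrite [dotv (invmx A *m q) (A *m w)]dotv_mul sA mulKVmx //.
rewrite [dotv (invmx A *m q) q]dotvC [dotv q w]dotvC.
lra.
Qed.

Lemma posdef_comb (R : realType) K (A1 A2 : 'M[R]_K) lam :
  posdef A1 -> posdef A2 -> 0 <= lam <= 1 -> posdef (lam *: A1 + (1 - lam) *: A2).
Proof.
move=> p1 p2 /andP[l0 l1] v nv.
have -> : (v^T *m (lam *: A1 + (1 - lam) *: A2) *m v) 0 0 =
  lam * (v^T *m A1 *m v) 0 0 + (1-lam) * (v^T *m A2 *m v) 0 0.
  by rewrite mulmxDr mulmxDl -!scalemxAr -!scalemxAl !mxE.
have a1 := p1 v nv; have a2 := p2 v nv.
have [->|lp] := eqVneq lam 0; first by rewrite mul0r add0r subr0 mul1r.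
have lp' : 0 < lam by rewrite lt_neqAle eq_sym lp.
have : 0 < lam * (v^T *m A1 *m v) 0 0 by apply: mulr_gt0.
have : 0 <= (1 - lam) * (v^T *m A2 *m v) 0 0 by apply: mulr_ge0; [lra|exact: ltW].
lra.
Qed.

Lemma frac_convex (R : realType) K (A1 A2 : 'M[R]_K) q1 q2 lam :
  posdef A1 -> posdef A2 -> A1^T = A1 -> A2^T = A2 -> 0 <= lam <= 1 ->
  dotv (lam *: q1 + (1 - lam) *: q2)
       (invmx (lam *: A1 + (1 - lam) *: A2) *m (lam *: q1 + (1 - lam) *: q2))
  <= lam * dotv q1 (invmx A1 *m q1) + (1 - lam) * dotv q2 (invmx A2 *m q2).
Proof.
move=> p1 p2 s1 s2 hl.
have pA := posdef_comb p1 p2 hl; have uA := posdef_unit pA.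
set A := lam *: A1 + (1 - lam) *: A2; set q := lam *: q1 + _.
set w := invmx A *m q.
have Aw : A *m w = q by rewrite /w mulKVmx.
have e : dotv q w = 2 * dotv w q - dotv w (A *m w).
  by rewrite Aw dotvC; lra.
rewrite e {1}/q /A mulmxDl -!scalemxAl !(dotvDr, dotvZr).
have b1 := quad_bound w q1 p1 s1; have b2 := quad_bound w q2 p2 s2.
case/andP: hl => l0 l1.
have c1 := ler_wpM2l l0 b1.
have : 0 <= 1 - lam by lra.
move/ler_wpM2l => /(_ _ _ b2) c2.
lra.
Qed.

Lemma part1 (R : realType) K (M : 'I_K -> 'M[R]_K) (g : R) :
  Msym M -> 0 < g ->
  (forall (B h1 qx1 qy1 h2 qx2 qy2 : 'cV[R]_K) (lam : R),
     posdef (Pmat M h1) -> posdef (Pmat M h2) -> 0 <= lam <= 1 ->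
     entropyE M g (lam *: h1 + (1 - lam) *: h2) (lam *: qx1 + (1 - lam) *: qx2)
       (lam *: qy1 + (1 - lam) *: qy2) B
     <= lam * entropyE M g h1 qx1 qy1 B + (1 - lam) * entropyE M g h2 qx2 qy2 B).
Proof.
move=> hs g0 B h1 qx1 qy1 h2 qx2 qy2 lam p1 p2 hl.
rewrite /entropyE /SGu PmatD !PmatZ.
have cx := frac_convex qx1 qx2 p1 p2 (Pmat_tr _ hs) (Pmat_tr _ hs) hl.
have cy := frac_convex qy1 qy2 p1 p2 (Pmat_tr _ hs) (Pmat_tr _ hs) hl.
have lin : dotv (lam *: h1 + (1 - lam) *: h2) B = lam * dotv h1 B + (1 - lam) * dotv h2 B.
  by rewrite !(dotvDl, dotvZl).
have quad : dotv (lam *: h1 + (1 - lam) *: h2) (lam *: h1 + (1 - lam) *: h2) =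
   lam * dotv h1 h1 + (1 - lam) * dotv h2 h2 - lam * (1 - lam) * dotv (h1 - h2) (h1 - h2).
  rewrite !(dotvDl, dotvDr, dotvZl, dotvZr, dotvNl, dotvNr) [dotv h2 h1]dotvC; ring.
have d0 := dotv_ge0 (h1 - h2).
case/andP: hl => l0 l1.
have ll : 0 <= lam * (1 - lam) by apply: mulr_ge0; lra.
have := mulr_ge0 ll d0 => e0.
have := mulr_ge0 (ltW g0) e0 => e1.
rewrite lin quad.
set X1 := dotv qx1 _ in cx *; set X2 := dotv qx2 _ in cx *.
set Y1 := dotv qy1 _ in cy *; set Y2 := dotv qy2 _ in cy *.
set Xl := dotv (lam *: qx1 + _) _ in cx *; set Yl := dotv (lam *: qy1 + _) _ in cy *.
have : Xl + Yl <= lam * (X1 + Y1) + (1 - lam) * (X2 + Y2) by lra.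
move: e1; set D := lam * (1 - lam) * _.
move=> e1 ee.
nra.
Qed.
Lemma dotv0 (R : realType) K (a : 'cV[R]_K) : dotv a 0 = 0.
Proof. by rewrite /dotv mulmx0 mxE. Qed.

Lemma smAl (R : realType) m n p (a : R) (A : 'M[R]_(m, n)) (B : 'M[R]_(n, p)) :
  (a *: A) *m B = a *: (A *m B).
Proof. by rewrite scalemxAl. Qed.
Lemma smAr (R : realType) m n p (a : R) (A : 'M[R]_(m, n)) (B : 'M[R]_(n, p)) :
  A *m (a *: B) = a *: (A *m B).
Proof. by rewrite scalemxAr. Qed.

Lemma alg_main (R : realType) K (M : 'I_K -> 'M[R]_K) (g : R)
  (h qx qy B u v ht qxt qyt ut vt hx qxx qyx ux vx Bx hy qxy qyy uy vy By : 'cV[R]_K) :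
  Msym M ->
  qx = Pmat M h *m u -> qy = Pmat M h *m v ->
  Pmat M h *m ut = qxt - Pmat M ht *m u -> Pmat M h *m vt = qyt - Pmat M ht *m v ->
  ht + qxx + qyy = 0 ->
  qxt + ((Pmat M qxx *m u + Pmat M qx *m ux) + (2^-1 * g) *: (Pmat M hx *m h + Pmat M h *m hx))
      + (Pmat M qyy *m u + Pmat M qy *m uy) = - g *: (Pmat M h *m Bx) ->
  qyt + (Pmat M qxx *m v + Pmat M qx *m vx)
      + ((Pmat M qyy *m v + Pmat M qy *m vy) + (2^-1 * g) *: (Pmat M hy *m h + Pmat M h *m hy))
      = - g *: (Pmat M h *m By) ->
  (2^-1 * ((dotv qxt u + dotv qx ut) + (dotv qyt v + dotv qy vt))
    + 2^-1 * g * (dotv ht h + dotv h ht) + g * (dotv ht B + dotv h 0))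
  + (2^-1 * ((dotv ux (Pmat M qx *m u) + dotv u (Pmat M qxx *m u + Pmat M qx *m ux))
            + (dotv vx (Pmat M qx *m v) + dotv v (Pmat M qxx *m v + Pmat M qx *m vx)))
     + g * (dotv qxx (h + B) + dotv qx (hx + Bx)))
  + (2^-1 * ((dotv vy (Pmat M qy *m v) + dotv v (Pmat M qyy *m v + Pmat M qy *m vy))
            + (dotv uy (Pmat M qy *m u) + dotv u (Pmat M qyy *m u + Pmat M qy *m uy)))
     + g * (dotv qyy (h + B) + dotv qy (hy + By)))
  = 0.
Proof.
move=> hs eqx eqy rut rvt p1 p2 p3.
have e1 : dotv qx ut = dotv u qxt - dotv u (Pmat M ht *m u).
  by rewrite eqx dotvC -dotvP // rut dotvBr.
have e2 : dotv qy vt = dotv v qyt - dotv v (Pmat M ht *m v).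
  by rewrite eqy dotvC -dotvP // rvt dotvBr.
rewrite e1 e2 [dotv qxt u]dotvC [dotv qyt v]dotvC.
have -> : qxt = - g *: (Pmat M h *m Bx) - ((Pmat M qxx *m u + Pmat M qx *m ux) + (2^-1 * g) *: (Pmat M hx *m h + Pmat M h *m hx))
      - (Pmat M qyy *m u + Pmat M qy *m uy).
  by apply/eqP; rewrite eq_sym !subr_eq -p2 addrAC.
have -> : qyt = - g *: (Pmat M h *m By) - (Pmat M qxx *m v + Pmat M qx *m vx)
      - ((Pmat M qyy *m v + Pmat M qy *m vy) + (2^-1 * g) *: (Pmat M hy *m h + Pmat M h *m hy)).
  by apply/eqP; rewrite eq_sym !subr_eq -p3 addrAC.
have -> : ht = - qxx - qyy.
  by apply: (addIr (qxx + qyy)); rewrite -opprD addNr addrA p1.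
rewrite !(dotvDl, dotvDr, dotvZl, dotvZr, dotvNl, dotvNr, PmatD, PmatN, PmatZ, mulmxDl, mulmxDr, mulNmx, mulmxN, dotv0, smAl, smAr).
have q1 : dotv qx hx = dotv u (Pmat M h *m hx) by rewrite eqx dotvC dotvP.
have q2 : dotv qx Bx = dotv u (Pmat M h *m Bx) by rewrite eqx dotvC dotvP.
have q3 : dotv qy hy = dotv v (Pmat M h *m hy) by rewrite eqy dotvC dotvP.
have q4 : dotv qy By = dotv v (Pmat M h *m By) by rewrite eqy dotvC dotvP.
rewrite q1 q2 q3 q4 [dotv h qxx]dotvC [dotv h qyy]dotvC.
rewrite [dotv ux _]dotvP // [dotv vx _]dotvP // [dotv vy _]dotvP // [dotv uy _]dotvP //.
rewrite [Pmat M hx *m h]Pmat_comm // [Pmat M hy *m h]Pmat_comm //.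
by field.
Qed.
Lemma ID_add (R : realType) (V : normedModType R) (F G : R -> V) (s : R) dF dG :
  is_derive s 1 F dF -> is_derive s 1 G dG -> is_derive s 1 (fun x => F x + G x) (dF + dG).
Proof. move=> h1 h2. exact: is_deriveD. Qed.
Lemma ID_scale (R : realType) (V : normedModType R) (F : R -> V) (s : R) k dF :
  is_derive s 1 F dF -> is_derive s 1 (fun x => k *: F x) (k *: dF).
Proof. move=> h1. exact: is_deriveZ. Qed.
Lemma ID_mulr (R : realType) (F G : R -> R) (s : R) dF dG :
  is_derive s 1 F dF -> is_derive s 1 G dG -> is_derive s 1 (fun x => F x * G x) (dF * G s + F s * dG).
Proof.
move=> h1 h2. have h := @is_deriveM R R^o F G s 1 dF dG h1 h2.
apply: (is_derive_eq h). rewrite -[LHS]/(F s * dG + G s * dF). ring. Qed.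
Lemma ID_cst (R : realType) (V : normedModType R) (c : V) (s : R) :
  is_derive s 1 (fun _ : R => c) 0.
Proof. exact: is_derive_cst. Qed.

Lemma ID_sum (R : realType) (V : normedModType R) (I : Type) (r : seq I)
  (F : I -> R -> V) dF (s : R) :
  (forall i, is_derive s 1 (F i) (dF i)) ->
  is_derive s 1 (fun x => \sum_(i <- r) F i x) (\sum_(i <- r) dF i).
Proof.
move=> h; elim: r => [|a r IH].
  rewrite big_nil (_ : (fun x => _) = fun _ => 0); first exact: ID_cst.
  by apply: funext => x; rewrite big_nil.
rewrite big_cons (_ : (fun x => _) = fun x => F a x + \sum_(i <- r) F i x).
  exact: ID_add.
by apply: funext => x; rewrite big_cons.
Qed.

Lemma ID_entry (R : realType) m n (F : R -> 'M[R]_(m, n)) (dF : 'M[R]_(m, n)) (s : R) i j :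
  is_derive s 1 F dF -> is_derive s 1 (fun x => F x i j) (dF i j).
Proof.
move=> [dF1 <-]; have := (derivable_mxP F s 1).1 dF1 i j => dij.
apply: DeriveDef => //; by rewrite derive_mx // mxE.
Qed.

Lemma ID_mx (R : realType) m n (F : R -> 'M[R]_(m, n)) (dF : 'M[R]_(m, n)) (s : R) :
  (forall i j, is_derive s 1 (fun x => F x i j) (dF i j)) -> is_derive s 1 F dF.
Proof.
move=> h.
have dF1 : derivable F s 1 by apply/derivable_mxP => i j; case: (h i j).
apply: DeriveDef => //; rewrite derive_mx //; apply/matrixP => i j; rewrite mxE.
by case: (h i j).
Qed.

Lemma ID_mulmx (R : realType) m n p (F : R -> 'M[R]_(m, n)) (G : R -> 'M[R]_(n, p)) (dF : 'M[R]_(m, n)) (dG : 'M[R]_(n,p)) (s : R) :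
  is_derive s 1 F dF -> is_derive s 1 G dG ->
  is_derive s 1 (fun x => F x *m G x) (dF *m G s + F s *m dG).
Proof.
move=> hF hG; apply: ID_mx => i j.
rewrite (_ : (fun x => _) = fun x => \sum_(k < n) F x i k * G x k j); last first.
  by apply: funext => x; rewrite mxE.
rewrite !mxE -big_split /=.
apply: ID_sum => k; apply: ID_mulr; exact: ID_entry.
Qed.

Lemma ID_tr (R : realType) m n (F : R -> 'M[R]_(m, n)) (dF : 'M[R]_(m, n)) (s : R) :
  is_derive s 1 F dF -> is_derive s 1 (fun x => (F x)^T) dF^T.
Proof.
move=> hF; apply: ID_mx => i j.
rewrite (_ : (fun x => _) = fun x => F x j i); last by apply: funext => x; rewrite mxE.
rewrite mxE; exact: ID_entry.
Qed.

Lemma ID_dotv (R : realType) K (F G : R -> 'cV[R]_K) (dF dG : 'cV[R]_K) (s : R) :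
  is_derive s 1 F dF -> is_derive s 1 G dG ->
  is_derive s 1 (fun x => dotv (F x) (G x)) (dotv dF (G s) + dotv (F s) dG).
Proof.
move=> hF hG; rewrite /dotv.
have -> : (dF^T *m G s) 0 0 + ((F s)^T *m dG) 0 0 = (dF^T *m G s + (F s)^T *m dG) 0 0.
  by rewrite [in RHS]mxE.
apply: (@ID_entry _ _ _ (fun x => (F x)^T *m G x)).
apply: ID_mulmx => //; exact: ID_tr.
Qed.

Lemma ID_Pmat (R : realType) K (M : 'I_K -> 'M[R]_K) (F : R -> 'cV[R]_K) (dF : 'cV[R]_K) (s : R) :
  is_derive s 1 F dF -> is_derive s 1 (fun x => Pmat M (F x)) (Pmat M dF).
Proof.
move=> hF; apply: ID_mx => i j.
rewrite (_ : (fun x => _) = fun x => \sum_(k < K) F x k 0 * M k i j); last first.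
  by apply: funext => x; rewrite /Pmat summxE; apply: eq_bigr => k _; rewrite mxE.
rewrite /Pmat summxE; under eq_bigr do rewrite mxE.
apply: ID_sum => k.
have := ID_mulr (@ID_entry _ _ _ F dF s k 0 hF) (ID_cst (M k i j) s).
by rewrite mulr0 addr0.
Qed.

Lemma D_ex (R : realType) (V : normedModType R) (F : R -> V) (s : R) :
  derivable F s 1 -> exists dF, is_derive s 1 F dF.
Proof. move=> h; exists ('D_1 F s); exact: derivableP. Qed.

Lemma D_of (R : realType) (V : normedModType R) (F : R -> V) (s : R) dF :
  is_derive s 1 F dF -> derivable F s 1.
Proof. by case. Qed.

Lemma D_mulr (R : realType) (F G : R -> R) (s : R) :
  derivable F s 1 -> derivable G s 1 -> derivable (fun x => F x * G x) s 1.
Proof.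
move=> /D_ex [dF hF] /D_ex [dG hG]; exact: D_of (ID_mulr hF hG).
Qed.

Lemma D_cst (R : realType) (c : R) (s : R) : derivable (fun _ : R => c) s 1.
Proof. exact: D_of (ID_cst c s). Qed.

Lemma D_sum (R : realType) (I : Type) (r : seq I) (F : I -> R -> R) (s : R) :
  (forall i, derivable (F i) s 1) -> derivable (fun x => \sum_(i <- r) F i x) s 1.
Proof.
move=> h; apply: (@D_of _ _ _ _ (\sum_(i <- r) 'D_1 (F i) s)).
apply: ID_sum => i; exact: derivableP.
Qed.

Lemma D_prod (R : realType) (I : Type) (r : seq I) (F : I -> R -> R) (s : R) :
  (forall i, derivable (F i) s 1) -> derivable (fun x => \prod_(i <- r) F i x) s 1.
Proof.
move=> h; elim: r => [|a r IH].
  rewrite (_ : (fun x => _) = fun _ => 1); first exact: D_cst.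
  by apply: funext => x; rewrite big_nil.
rewrite (_ : (fun x => _) = fun x => F a x * \prod_(i <- r) F i x).
  exact: D_mulr.
by apply: funext => x; rewrite big_cons.
Qed.

Lemma D_det (R : realType) n (F : R -> 'M[R]_n) (s : R) :
  (forall i j, derivable (fun x => F x i j) s 1) -> derivable (fun x => \det (F x)) s 1.
Proof.
move=> h; rewrite /determinant.
apply: D_sum => sg; apply: D_mulr; first exact: D_cst.
apply: D_prod => i; exact: h.
Qed.

Lemma D_adj (R : realType) n (F : R -> 'M[R]_n) (s : R) i j :
  (forall i j, derivable (fun x => F x i j) s 1) -> derivable (fun x => \adj (F x) i j) s 1.
Proof.
move=> h.
rewrite (_ : (fun x => _) = fun x => (-1) ^+ (j + i) * \det (row' j (col' i (F x)))); last first.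
  by apply: funext => x; rewrite mxE /cofactor.
apply: D_mulr; first exact: D_cst.
apply: (@D_det _ _ (fun x => row' j (col' i (F x)))) => a b.
rewrite (_ : (fun x => _) = fun x => F x (lift j a) (lift i b)); first exact: h.
by apply: funext => x; rewrite !mxE.
Qed.

Lemma D_invmx (R : realType) n (F : R -> 'M[R]_n) (s : R) i j :
  (forall x, F x \in unitmx) ->
  (forall i j, derivable (fun x => F x i j) s 1) -> derivable (fun x => invmx (F x) i j) s 1.
Proof.
move=> u h.
rewrite (_ : (fun x => _) = fun x => (\det (F x))^-1 * \adj (F x) i j); last first.
  by apply: funext => x; rewrite /invmx u mxE.
apply: D_mulr; last exact: D_adj.
apply: derivableV; last exact: D_det.
by have := u s; rewrite unitmxE unitfE.
Qed.

Lemma ID_SGu (R : realType) K (M : 'I_K -> 'M[R]_K) (h q : R -> 'cV[R]_K) (dh dq : 'cV[R]_K) (s : R) :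
  (forall x, Pmat M (h x) \in unitmx) -> is_derive s 1 h dh -> is_derive s 1 q dq ->
  is_derive s 1 (fun x => SGu M (h x) (q x))
     (invmx (Pmat M (h s)) *m (dq - Pmat M dh *m SGu M (h s) (q s))).
Proof.
move=> u hh hq.
have hP := ID_Pmat M hh.
have du : derivable (fun x => SGu M (h x) (q x)) s 1.
  apply/derivable_mxP => i j; rewrite /SGu.
  rewrite (_ : (fun x => _) = fun x => \sum_k invmx (Pmat M (h x)) i k * q x k j); last first.
    by apply: funext => x; rewrite mxE.
  apply: D_sum => k; apply: D_mulr.
    apply: D_invmx => // a b; exact: D_of (ID_entry a b hP).
  exact: D_of (ID_entry k j hq).
have hu := derivableP du.
have e := ID_mulmx hP hu.
have e2 : (fun x => Pmat M (h x) *m SGu M (h x) (q x)) = q.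
  by apply: funext => x; rewrite /SGu mulKVmx.
rewrite e2 in e.
case: e => _ E1; case: hq => _ E2.
rewrite E2 in E1.
apply: (is_derive_eq hu).
by rewrite E1 addrAC subrr add0r mulKmx.
Qed.

Lemma ID_mulc (R : realType) (F : R -> R) (s k : R) dF :
  is_derive s 1 F dF -> is_derive s 1 (fun x => k * F x) (k * dF).
Proof.
move=> h; have := ID_mulr (ID_cst k s) h; rewrite mul0r add0r; exact.
Qed.

Lemma diff_id' (R : realType) (x : R) : differentiable (@id R) x.
Proof. apply/derivable1_diffP; exact: derivable_id. Qed.

Lemma diff_cst' (R : realType) (V : normedModType R) (c : V) (x : R) :
  differentiable (fun _ : R => c) x.
Proof. apply/derivable1_diffP; exact: (D_of (ID_cst c x)). Qed.

Lemma ID_px (R : realType) (V : normedModType R) (f : R -> R -> R -> V) :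
  (forall p : R * R * R, differentiable (fun p : R * R * R => f p.1.1 p.1.2 p.2) p) ->
  forall x y t : R, is_derive x 1 (fun s => f s y t) (pdx f x y t).
Proof.
move=> hf x y t.
have d : derivable (fun s => f s y t) x 1.
  apply/derivable1_diffP.
  have -> : (fun s => f s y t) = (fun p : R * R * R => f p.1.1 p.1.2 p.2) \o (fun s => (s, y, t)) by [].
  apply: differentiable_comp; last exact: hf.
  apply: differentiable_pair; last exact: diff_cst'.
  apply: differentiable_pair; [exact: diff_id' | exact: diff_cst'].
by apply: DeriveDef => //; rewrite /pdx derive1E.
Qed.

Lemma ID_py (R : realType) (V : normedModType R) (f : R -> R -> R -> V) :
  (forall p : R * R * R, differentiable (fun p : R * R * R => f p.1.1 p.1.2 p.2) p) ->
  forall x y t : R, is_derive y 1 (fun s => f x s t) (pdy f x y t).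
Proof.
move=> hf x y t.
have d : derivable (fun s => f x s t) y 1.
  apply/derivable1_diffP.
  have -> : (fun s => f x s t) = (fun p : R * R * R => f p.1.1 p.1.2 p.2) \o (fun s => (x, s, t)) by [].
  apply: differentiable_comp; last exact: hf.
  apply: differentiable_pair; last exact: diff_cst'.
  apply: differentiable_pair; [exact: diff_cst' | exact: diff_id'].
by apply: DeriveDef => //; rewrite /pdy derive1E.
Qed.

Lemma ID_pt (R : realType) (V : normedModType R) (f : R -> R -> R -> V) :
  (forall p : R * R * R, differentiable (fun p : R * R * R => f p.1.1 p.1.2 p.2) p) ->
  forall x y t : R, is_derive t 1 (fun s => f x y s) (pdt f x y t).
Proof.
move=> hf x y t.
have d : derivable (fun s => f x y s) t 1.
  apply/derivable1_diffP.
  have -> : (fun s => f x y s) = (fun p : R * R * R => f p.1.1 p.1.2 p.2) \o (fun s => (x, y, s)) by [].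
  apply: differentiable_comp; last exact: hf.
  apply: differentiable_pair; last exact: diff_id'.
  apply: differentiable_pair; exact: diff_cst'.
by apply: DeriveDef => //; rewrite /pdt derive1E.
Qed.

Lemma ID_px2 (R : realType) (V : normedModType R) (f : R -> R -> V) :
  (forall p : R * R, differentiable (fun p : R * R => f p.1 p.2) p) ->
  forall x y : R, is_derive x 1 (fun s => f s y) (pdx2 f x y).
Proof.
move=> hf x y.
have d : derivable (fun s => f s y) x 1.
  apply/derivable1_diffP.
  have -> : (fun s => f s y) = (fun p : R * R => f p.1 p.2) \o (fun s => (s, y)) by [].
  apply: differentiable_comp; last exact: hf.
  apply: differentiable_pair; [exact: diff_id' | exact: diff_cst'].
by apply: DeriveDef => //; rewrite /pdx2 derive1E.
Qed.

Lemma ID_py2 (R : realType) (V : normedModType R) (f : R -> R -> V) :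
  (forall p : R * R, differentiable (fun p : R * R => f p.1 p.2) p) ->
  forall x y : R, is_derive y 1 (fun s => f x s) (pdy2 f x y).
Proof.
move=> hf x y.
have d : derivable (fun s => f x s) y 1.
  apply/derivable1_diffP.
  have -> : (fun s => f x s) = (fun p : R * R => f p.1 p.2) \o (fun s => (x, s)) by [].
  apply: differentiable_comp; last exact: hf.
  apply: differentiable_pair; [exact: diff_cst' | exact: diff_id'].
by apply: DeriveDef => //; rewrite /pdy2 derive1E.
Qed.

Definition dSG (R : realType) K (M : 'I_K -> 'M[R]_K) (h q dh dq : 'cV[R]_K) :=
  invmx (Pmat M h) *m (dq - Pmat M dh *m SGu M h q).

Lemma ID_E (R : realType) K (M : 'I_K -> 'M[R]_K) (g : R) (h q1 q2 B : R -> 'cV[R]_K)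
  (dh dq1 dq2 dB : 'cV[R]_K) (s : R) :
  (forall x, Pmat M (h x) \in unitmx) -> is_derive s 1 h dh -> is_derive s 1 q1 dq1 ->
  is_derive s 1 q2 dq2 -> is_derive s 1 B dB ->
  is_derive s 1 (fun x => entropyE M g (h x) (q1 x) (q2 x) (B x))
   (2^-1 * ((dotv dq1 (SGu M (h s) (q1 s)) + dotv (q1 s) (dSG M (h s) (q1 s) dh dq1))
          + (dotv dq2 (SGu M (h s) (q2 s)) + dotv (q2 s) (dSG M (h s) (q2 s) dh dq2)))
    + 2^-1 * g * (dotv dh (h s) + dotv (h s) dh) + g * (dotv dh (B s) + dotv (h s) dB)).
Proof.
move=> u hh h1 h2 hB; rewrite /entropyE.
apply: ID_add; [apply: ID_add|]; apply: ID_mulc; [apply: ID_add| |];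
  apply: ID_dotv => //; exact: ID_SGu.
Qed.

Lemma ID_H (R : realType) K (M : 'I_K -> 'M[R]_K) (g : R) (h q1 q2 B : R -> 'cV[R]_K)
  (dh dq1 dq2 dB : 'cV[R]_K) (s : R) :
  (forall x, Pmat M (h x) \in unitmx) -> is_derive s 1 h dh -> is_derive s 1 q1 dq1 ->
  is_derive s 1 q2 dq2 -> is_derive s 1 B dB ->
  is_derive s 1 (fun x => entropyH M g (h x) (q1 x) (q2 x) (B x))
   (2^-1 * ((dotv (dSG M (h s) (q1 s) dh dq1) (Pmat M (q1 s) *m SGu M (h s) (q1 s))
             + dotv (SGu M (h s) (q1 s)) (Pmat M dq1 *m SGu M (h s) (q1 s)
                  + Pmat M (q1 s) *m dSG M (h s) (q1 s) dh dq1))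
          + (dotv (dSG M (h s) (q2 s) dh dq2) (Pmat M (q1 s) *m SGu M (h s) (q2 s))
             + dotv (SGu M (h s) (q2 s)) (Pmat M dq1 *m SGu M (h s) (q2 s)
                  + Pmat M (q1 s) *m dSG M (h s) (q2 s) dh dq2)))
    + g * (dotv dq1 (h s + B s) + dotv (q1 s) (dh + dB))).
Proof.
move=> u hh h1 h2 hB; rewrite /entropyH.
have s1 := ID_SGu u hh h1; have s2 := ID_SGu u hh h2.
have P1 := ID_Pmat M h1.
apply: ID_add; apply: ID_mulc.
  apply: ID_add; apply: ID_dotv => //; exact: ID_mulmx.
apply: ID_dotv => //; exact: ID_add.
Qed.

Lemma ID_FF (R : realType) K (M : 'I_K -> 'M[R]_K) (g : R) (h q1 q2 : R -> 'cV[R]_K)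
  (dh dq1 : 'cV[R]_K) (s : R) :
  (forall x, Pmat M (h x) \in unitmx) -> is_derive s 1 h dh -> is_derive s 1 q1 dq1 ->
  is_derive s 1 (fun x => flux_F_qx M g (h x) (q1 x) (q2 x))
   ((Pmat M dq1 *m SGu M (h s) (q1 s) + Pmat M (q1 s) *m dSG M (h s) (q1 s) dh dq1)
    + (2^-1 * g) *: (Pmat M dh *m h s + Pmat M (h s) *m dh)).
Proof.
move=> u hh h1; rewrite /flux_F_qx.
have s1 := ID_SGu u hh h1.
have P1 := ID_Pmat M h1; have Ph := ID_Pmat M hh.
rewrite (_ : (fun x => _) = fun x => Pmat M (q1 x) *m SGu M (h x) (q1 x)
   + (2^-1 * g) *: (Pmat M (h x) *m h x)); last first.
  by apply: funext => x; rewrite /SGu mulmxA.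
apply: ID_add; first exact: ID_mulmx.
apply: ID_scale; exact: ID_mulmx.
Qed.

Lemma ID_FQ (R : realType) K (M : 'I_K -> 'M[R]_K) (h q1 q2 : R -> 'cV[R]_K)
  (dh dq1 dq2 : 'cV[R]_K) (s : R) :
  (forall x, Pmat M (h x) \in unitmx) -> is_derive s 1 h dh -> is_derive s 1 q1 dq1 ->
  is_derive s 1 q2 dq2 ->
  is_derive s 1 (fun x => flux_F_qy M (h x) (q1 x) (q2 x))
   (Pmat M dq1 *m SGu M (h s) (q2 s) + Pmat M (q1 s) *m dSG M (h s) (q2 s) dh dq2).
Proof.
move=> u hh h1 h2; rewrite /flux_F_qy.
have s2 := ID_SGu u hh h2.
have P1 := ID_Pmat M h1.
rewrite (_ : (fun x => _) = fun x => Pmat M (q1 x) *m SGu M (h x) (q2 x)); last first.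
  by apply: funext => x; rewrite /SGu mulmxA.
exact: ID_mulmx.
Qed.

Lemma DV (R : realType) (V : normedModType R) (f : R -> V) (s : R) df :
  is_derive s 1 f df -> derive1 f s = df.
Proof. by case=> _ <-; rewrite derive1E. Qed.

Lemma Mk_sym (R : realType) (dT : measure_display) (T : measurableType dT)
    (P : probability T R) (d K : nat) (xi : T -> d.-tuple R)
    (phi : 'I_K -> d.-tuple R -> R) : Msym (Mk P xi phi).
Proof.
move=> k l m; rewrite /Mk !mxE; split; congr (fine _); congr ('E_P[_])%E;
  apply: funext => w; ring.
Qed.

Unset Implicit Arguments.

Theorem theorem3p1 (R : realType) (dT : measure_display) (T : measurableType dT)
    (P : probability T R) (d : nat) (xi : T -> d.-tuple R)
    (rho : d.-tuple R -> R) (K : nat) (hK : (0 < K)%N)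
    (phi : 'I_K -> d.-tuple R -> R) (g : R) :
  measurable_fun setT xi ->
  has_density P xi rho ->
  finite_moments P xi ->
  (forall k, is_polyfun (phi k)) ->
  (forall t, phi (Ordinal hK) t = 1) ->
  (forall k l : 'I_K,
     'E_P[fun w => (phi k (xi w) * phi l (xi w))%R] = ((k == l)%:R)%:E)%E ->
  0 < g ->
  let M := Mk P xi phi in
  (* (i) E is convex in U = (h, qx, qy) on the set where P(h) is positive definite *)
  (forall (B h1 qx1 qy1 h2 qx2 qy2 : 'cV[R]_K) (lam : R),
     posdef (Pmat M h1) -> posdef (Pmat M h2) -> 0 <= lam <= 1 ->
     entropyE M g (lam *: h1 + (1 - lam) *: h2) (lam *: qx1 + (1 - lam) *: qx2)
       (lam *: qy1 + (1 - lam) *: qy2) B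
     <= lam * entropyE M g h1 qx1 qy1 B + (1 - lam) * entropyE M g h2 qx2 qy2 B)
  /\
  (* (ii) every smooth solution with P(h) positive definite satisfies
          E_t + H_x + K_y = 0 *)
  (forall (h qx qy : R -> R -> R -> 'cV[R]_K) (B : R -> R -> 'cV[R]_K),
     (forall p : R * R * R, differentiable (fun p : R * R * R => h p.1.1 p.1.2 p.2) p) ->
     (forall p : R * R * R, differentiable (fun p : R * R * R => qx p.1.1 p.1.2 p.2) p) ->
     (forall p : R * R * R, differentiable (fun p : R * R * R => qy p.1.1 p.1.2 p.2) p) ->
     (forall p : R * R, differentiable (fun p : R * R => B p.1 p.2) p) ->
     (forall x y t, posdef (Pmat M (h x y t))) ->
     (forall x y t,
        pdt h x y t + pdx qx x y t + pdy qy x y t = 0) ->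
     (forall x y t,
        pdt qx x y t
        + pdx (fun x y t => flux_F_qx M g (h x y t) (qx x y t) (qy x y t)) x y t
        + pdy (fun x y t => flux_G_qx M (h x y t) (qx x y t) (qy x y t)) x y t
        = - g *: (Pmat M (h x y t) *m pdx2 B x y)) ->
     (forall x y t,
        pdt qy x y t
        + pdx (fun x y t => flux_F_qy M (h x y t) (qx x y t) (qy x y t)) x y t
        + pdy (fun x y t => flux_G_qy M g (h x y t) (qx x y t) (qy x y t)) x y t
        = - g *: (Pmat M (h x y t) *m pdy2 B x y)) ->
     forall x y t,
       pdt (fun x y t => entropyE M g (h x y t) (qx x y t) (qy x y t) (B x y)) x y t
       + pdx (fun x y t => entropyH M g (h x y t) (qx x y t) (qy x y t) (B x y)) x y t
       + pdy (fun x y t => entropyK M g (h x y t) (qx x y t) (qy x y t) (B x y)) x y t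
       = 0).
Proof.
move=> _ _ _ _ _ _ g0 M.
have hs : Msym M by exact: Mk_sym.
split; first exact: part1.
move=> h qx qy B dh dqx dqy dB pd p1 p2 p3 x y t.
have ut : forall s, Pmat M (h x y s) \in unitmx by move=> s; exact: posdef_unit.
have ux : forall s, Pmat M (h s y t) \in unitmx by move=> s; exact: posdef_unit.
have uy : forall s, Pmat M (h x s t) \in unitmx by move=> s; exact: posdef_unit.
have Ht := ID_pt dh x y t; have Qxt := ID_pt dqx x y t; have Qyt := ID_pt dqy x y t.
have Hx := ID_px dh x y t; have Qxx := ID_px dqx x y t; have Qyx := ID_px dqy x y t.
have Hy := ID_py dh x y t; have Qxy := ID_py dqx x y t; have Qyy := ID_py dqy x y t.
have Bx := ID_px2 dB x y; have By := ID_py2 dB x y.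
have Bt := ID_cst (B x y) t.
have dE := ID_E g ut Ht Qxt Qyt Bt.
have dH := ID_H g ux Hx Qxx Qyx Bx.
have dK : is_derive y 1 (fun s => entropyK M g (h x s t) (qx x s t) (qy x s t) (B x s)) _
  := ID_H g uy Hy Qyy Qxy By.
have FFx := ID_FF g (fun s => qy s y t) ux Hx Qxx.
have GQy : is_derive y 1 (fun s => flux_G_qx M (h x s t) (qx x s t) (qy x s t)) _
  := ID_FQ uy Hy Qyy Qxy.
have FQx := ID_FQ ux Hx Qxx Qyx.
have GFy : is_derive y 1 (fun s => flux_G_qy M g (h x s t) (qx x s t) (qy x s t)) _
  := ID_FF g (fun s => qx x s t) uy Hy Qyy.
have e2 := p2 x y t; have e3 := p3 x y t; have e1 := p1 x y t.
rewrite /pdt /pdx /pdy in e1 e2 e3 *.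
rewrite (DV dE) (DV dH) (DV dK).
rewrite (DV FFx) (DV GQy) (DV Qxt) in e2.
rewrite (DV FQx) (DV GFy) (DV Qyt) in e3.
have uu := ut t.
set hh := h x y t; set qq1 := qx x y t; set qq2 := qy x y t.
have := @alg_main R K M g hh qq1 qq2 (B x y) (SGu M hh qq1) (SGu M hh qq2)
  (pdt h x y t) (pdt qx x y t) (pdt qy x y t)
  (dSG M hh qq1 (pdt h x y t) (pdt qx x y t)) (dSG M hh qq2 (pdt h x y t) (pdt qy x y t))
  (pdx h x y t) (pdx qx x y t) (pdx qy x y t)
  (dSG M hh qq1 (pdx h x y t) (pdx qx x y t)) (dSG M hh qq2 (pdx h x y t) (pdx qy x y t))
  (pdx2 B x y)
  (pdy h x y t) (pdy qx x y t) (pdy qy x y t)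
  (dSG M hh qq1 (pdy h x y t) (pdy qx x y t)) (dSG M hh qq2 (pdy h x y t) (pdy qy x y t))
  (pdy2 B x y) hs.
move=> /(_ _ _ _ _ e1 e2 e3); apply; by rewrite /dSG /SGu mulKVmx.
Qed.
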